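(* Let $G$ be a connected graph on more than one vertex. Then $\chi_{alg}(G)=2$ if and only if $\chi(G)=2$.
   Context: Graphs are finite, loopless, with symmetric edge sets; $K_c$ is the complete graph on $c$ vertices; $\chi(G)$ is the usual chromatic number. For $|I|=n$, $|O|=m$ ($O=\{0,\dots,m-1\}$), $\mathbb F(n,m)$ is the free product of $n$ copies of the cyclic group of order $m$ with generators $u_v$, $\mathbb C[\mathbb F(n,m)]$ its group $*$-algebra, $\omega=e^{2\pi i/m}$, $e_{v,a}=\frac1m\sum_{k=0}^{m-1}(\omega^{-a}u_v)^k$. For graphs $G,H$, the graph homomorphism game has $I=V(G)$, $O=V(H)$, $\lambda(v,w,a,b)=0$ iff ($v=w$, $a\ne b$) or ($(v,w)\in E(G)$, $(a,b)\notin E(H)$); $\mathcal I(G,H)$ is the two-sided $*$-ideal generated by $\{e_{v,a}e_{w,b}:\lambda(v,w,a,b)=0\}$, $\mathcal A(G,H)$ the quotient, and $\chi_{alg}(G)=\min\{c:\mathcal A(G,K_c)\ne0\}$. *)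

(* Defs.v *)
From HB Require Import structures.
From mathcomp Require Import all_boot all_order all_algebra.
From mathcomp Require Import fingraph.
From mathcomp Require Import complex.
From mathcomp Require Import reals trigo Rstruct.
Set Implicit Arguments. Unset Strict Implicit. Unset Printing Implicit Defensive.
Import Order.TTheory GRing.Theory Num.Theory.
Local Open Scope ring_scope.

Definition simple_graph (V : finType) (e : rel V) : Prop :=
  irreflexive e /\ symmetric e.

Definition connected_graph (V : finType) (e : rel V) : Prop :=
  forall x y : V, connect e x y.

Definition Kedge (c : nat) : rel 'I_c := fun a b => a != b.

Definition colorable (V : finType) (e : rel V) (c : nat) : Prop :=
  exists f : V -> 'I_c, forall x y, e x y -> Kedge (f x) (f y).

Definition is_chromatic_number (V : finType) (e : rel V) (c : nat) : Prop :=
  (0 < c)%N /\ colorable e c /\ (forall c', (0 < c')%N -> (c' < c)%N -> ~ colorable e c').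

Definition RR := Rdefinitions.R.
Definition CC := RR[i].

Definition omega (m : nat) : CC :=
  Complex (cos (2 * pi / m%:R : RR)) (sin (2 * pi / m%:R : RR)).

(* A word is a sequence of letters (v,k) standing for u_v^k.  Group elements
   of F(n,m) are the reduced words (exponents in 1..m-1, consecutive letters on
   distinct generators); [reduce] computes the reduced word equal (in F(n,m))
   to a given word, so that the group product of reduced words w1, w2 is
   reduce (w1 ++ w2). *)
Section FreeProd.
Variables (V : finType) (m : nat).

Definition word := seq (V * nat).

(* push a letter onto a reduced word stored in reverse order *)
Definition push (st : word) (l : V * nat) : word :=
  let k := (l.2 %% m)%N in
  if k == 0%N then st else
  match st with
  | (v', k') :: st' =>
      if v' == l.1 then
        let k2 := ((k' + k) %% m)%N in
        if k2 == 0%N then st' else (v', k2) :: st'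
      else (l.1, k) :: st
  | [::] => [:: (l.1, k)]
  end.

Definition reduce (w : word) : word := rev (foldl push [::] w).

Definition winv (w : word) : word :=
  rev [seq (l.1, (m - l.2 %% m)%N) | l <- w].

(* An element is a finite formal combination sum_j c_j w_j of words; two such
   expressions are the same element of C[F(n,m)] iff they have the same
   coefficient at every group element (reduced word). *)
Definition galg := seq (CC * word).

Definition coef (x : galg) (g : word) : CC :=
  \sum_(t <- x | reduce t.2 == g) t.1.

Definition galg_eq (x y : galg) : Prop := forall g : word, coef x g = coef y g.

Definition gone : galg := [:: (1, [::])].
Definition gadd (x y : galg) : galg := x ++ y.
Definition gsum (s : seq galg) : galg := flatten s.
Definition gmul (x y : galg) : galg :=
  [seq (a.1 * b.1, a.2 ++ b.2) | a <- x, b <- y].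
Definition gadj (x : galg) : galg := [seq (conjc a.1, winv a.2) | a <- x].

(* e_{v,a} = 1/m sum_{k=0}^{m-1} (omega^{-a} u_v)^k *)
Definition proj (v : V) (a : nat) : galg :=
  [seq ((omega m) ^- (a * k) / m%:R, [:: (v, k)]) | k <- iota 0 m].

End FreeProd.

(* lambda(v,w,a,b) = 0 *)
Definition lambda0 (V W : finType) (eG : rel V) (eH : rel W) (v w : V) (a b : W)
  : bool :=
  ((v == w) && (a != b)) || (eG v w && ~~ eH a b).

Definition ideal_gen (V : finType) (c : nat) (v w : V) (a b : 'I_c) (flag : bool)
  : galg V :=
  let p := gmul (proj c v a) (proj c w b) in
  if flag then @gadj V c p else p.

(* z lies in the two-sided *-ideal I(G,K_c) of C[F(|V|,c)] generated by the
   e_{v,a} e_{w,b} with lambda(v,w,a,b) = 0, i.e. z is a finite sum of terms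
   x * s * y with s a generator or the adjoint of a generator. *)
Definition in_ideal (V : finType) (e : rel V) (c : nat) (z : galg V) : Prop :=
  exists t : seq (galg V * (V * V * 'I_c * 'I_c * bool) * galg V),
    (forall s, s \in t ->
       lambda0 e (@Kedge c) s.1.2.1.1.1.1 s.1.2.1.1.1.2 s.1.2.1.1.2 s.1.2.1.2) /\
    @galg_eq V c z
      (gsum [seq gmul (gmul s.1.1
                 (@ideal_gen V c s.1.2.1.1.1.1 s.1.2.1.1.1.2 s.1.2.1.1.2 s.1.2.1.2 s.1.2.2))
                 s.2 | s <- t]).

(* A(G,K_c) = C[F(n,c)] / I(G,K_c) is nonzero iff 1 is not in the ideal *)
Definition A_nonzero (V : finType) (e : rel V) (c : nat) : Prop :=
  ~ @in_ideal V e c (gone V).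

Definition is_chi_alg (V : finType) (e : rel V) (c : nat) : Prop :=
  (0 < c)%N /\ A_nonzero e c /\
  (forall c', (0 < c')%N -> (c' < c)%N -> ~ A_nonzero e c').

(* Main.v *)
Require Import Defs.
From mathcomp Require Import all_boot all_order all_algebra.
From mathcomp Require Import complex reals trigo Rstruct ring.
Set Implicit Arguments. Unset Strict Implicit. Unset Printing Implicit Defensive.
Import Order.TTheory GRing.Theory Num.Theory.
From Stdlib Require Classical_Prop.
Lemma ideal1 (V : finType) (e : rel V) v w : e v w -> in_ideal e 1 (gone V).
Proof.
move=> evw.
exists [:: (gone V, (v, w, ord0, ord0, false), gone V)]; split.
  by move=> s; rewrite inE => /eqP -> /=; rewrite /lambda0 evw /Kedge eqxx orbT.
move=> g; rewrite /coef /= !big_cons !big_nil /=.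
have -> : reduce 1 [:: (v,0%N);(w,0%N)] = [::] by [].
by rewrite mul0n expr0 invr1 !mulr1.
Qed.
Local Open Scope ring_scope.
Lemma omega2 : omega 2 = -1.
Proof.
rewrite /omega.
have -> : (2 * pi / 2%:R : RR) = pi by rewrite mulrC mulKf // pnatr_eq0.
rewrite cospi sinpi.
apply/eqP; rewrite eq_complex /=. by rewrite oppr0 !eqxx.
Qed.
Section Char.
Variables (V : finType) (s : V -> CC).
Hypothesis hs : forall v, s v ^+ 2 = 1.
Hypothesis hc : forall v, (s v)^*%C = s v.

Definition chw (w : word V) : CC := \prod_(l <- w) s l.1 ^+ l.2.

Lemma sexp v n : s v ^+ n = s v ^+ (n %% 2).
Proof. by rewrite {1}(divn_eq n 2) exprD mulnC exprM hs expr1n mul1r. Qed.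

Lemma chw_cons l w : chw (l :: w) = s l.1 ^+ l.2 * chw w.
Proof. by rewrite /chw big_cons. Qed.

Lemma chw_push st l : chw (push 2 st l) = chw st * s l.1 ^+ l.2.
Proof.
case: l => v k /=; rewrite /push /=.
case: eqP => [k0|kn0].
  by rewrite sexp k0 mulr1.
case: st => [|[v' k'] st'].
  by rewrite /chw big_seq1 big_nil mul1r -sexp.
case: eqP => [<-|_].
  case: eqP => [k20|_].
    rewrite chw_cons mulrAC -exprD sexp.
    by rewrite modnDmr in k20; rewrite k20 expr0 mul1r.
  by rewrite !chw_cons modnDmr -sexp exprD mulrAC.
by rewrite !chw_cons -sexp mulrC.
Qed.

Lemma chw_foldl st w : chw (foldl (push 2) st w) = chw st * chw w.
Proof.
elim: w st => [|l w IH] st /=; first by rewrite /chw big_nil mulr1.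
by rewrite IH chw_push chw_cons mulrA.
Qed.

Lemma chw_reduce w : chw (reduce 2 w) = chw w.
Proof.
have chw_rev u : chw (rev u) = chw u by rewrite /chw big_rev.
by rewrite /reduce chw_rev chw_foldl /chw big_nil mul1r.
Qed.

Lemma chw_cat w1 w2 : chw (w1 ++ w2) = chw w1 * chw w2.
Proof. by rewrite /chw big_cat. Qed.

Lemma chw_conj w : (chw w)^*%C = chw w.
Proof. rewrite /chw rmorph_prod; apply: eq_bigr => l _; by rewrite rmorphXn; congr (_ ^+ _); apply: hc. Qed.

Lemma chw_winv w : chw (winv 2 w) = chw w.
Proof.
rewrite /winv /chw big_rev big_map; apply: eq_bigr => [[v k]] _ /=.
rewrite sexp [in RHS]sexp; congr (_ ^+ _).
by rewrite !modn2; case: (odd k).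
Qed.

Definition chi (x : galg V) : CC := \sum_(t <- x) t.1 * chw t.2.

Lemma chi_cat x y : chi (x ++ y) = chi x + chi y.
Proof. by rewrite /chi big_cat. Qed.

Lemma chi_gsum l : chi (gsum l) = \sum_(x <- l) chi x.
Proof.
elim: l => [|x l IH]; first by rewrite big_nil /chi /gsum /= big_nil.
by rewrite big_cons -IH -chi_cat.
Qed.

Lemma chi_gmul x y : chi (gmul x y) = chi x * chi y.
Proof.
rewrite /chi /gmul big_allpairs_dep /= mulr_suml; apply: eq_bigr => a _.
rewrite mulr_sumr; apply: eq_bigr => b _ /=.
by rewrite chw_cat mulrACA.
Qed.

Lemma chi_gadj x : chi (gadj 2 x) = (chi x)^*%C.
Proof.
rewrite /chi /gadj big_map rmorph_sum; apply: eq_bigr => a _ /=.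
by rewrite rmorphM /= chw_winv chw_conj.
Qed.

Lemma chi_gone : chi (gone V) = 1.
Proof. by rewrite /chi /gone big_seq1 /chw big_nil mulr1. Qed.

Lemma chi_part x (G : seq (word V)) : uniq G ->
  {subset [seq reduce 2 t.2 | t <- x] <= G} ->
  chi x = \sum_(g <- G) coef 2 x g * chw g.
Proof.
move=> uG sub.
rewrite /chi /coef.
transitivity (\sum_(t <- x) \sum_(g <- G | reduce 2 t.2 == g) t.1 * chw g).
  apply: eq_big_seq => t tx.
  rewrite -big_filter.
  have -> : [seq g <- G | reduce 2 t.2 == g] = [:: reduce 2 t.2].
    rewrite -(filter_pred1_uniq uG (sub _ (map_f _ tx))).
    by apply: eq_filter => g /=; rewrite eq_sym.
  by rewrite big_seq1 chw_reduce.
rewrite (eq_bigr (fun t => \sum_(g <- G) (if reduce 2 t.2 == g then t.1 * chw g else 0))); last by move=> t _; rewrite big_mkcond.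
rewrite exchange_big /=.
apply: eq_big_seq => g _.
by rewrite mulr_suml [RHS]big_mkcond.
Qed.

Lemma chi_eq x y : galg_eq 2 x y -> chi x = chi y.
Proof.
move=> h.
set G := undup [seq reduce 2 t.2 | t <- x ++ y].
have uG : uniq G by apply: undup_uniq.
rewrite (chi_part (G := G) uG); last first.
  by move=> g gi; rewrite mem_undup map_cat mem_cat gi.
rewrite (chi_part (G := G) uG); last first.
  by move=> g gi; rewrite mem_undup map_cat mem_cat gi orbT.
by apply: eq_bigr => g _; rewrite h.
Qed.

End Char.
Lemma chi_proj (V : finType) (f : V -> 'I_2) v (a : 'I_2) :
  chi (fun v => (-1) ^+ (f v)) (proj 2 v a) = (a == f v)%:R.
Proof.
rewrite /chi /proj big_map.
have -> : iota 0 2 = [:: 0%N; 1%N] by [].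
rewrite big_cons big_seq1 /chw !big_seq1 /= omega2 !muln0 muln1 !expr0 !expr1 invr1 !mulr1.
have h2 : (2%:R : CC) != 0 by rewrite pnatr_eq0.
case: a => [[|[|//]] ?]; case: (f v) => [[|[|//]] ?] /=; rewrite ?expr0 ?expr1 ?invrN1 ?mulN1r ?mul1r.
all: rewrite ?invr1 ?mul1r ?mulr1 ?mulrN1 ?opprK ?subrr //.
all: by rewrite -mulr2n -(mulr_natr (2^-1 : CC) 2) mulVf.
Qed.


Lemma col_nonzero (V : finType) (e : rel V) : colorable e 2 -> A_nonzero e 2.
Proof.
case=> f hf [t [ht heq]].
pose s := fun v => (-1) ^+ (f v) : CC.
have hs v : s v ^+ 2 = 1 by apply: sqrr_sign.
have hc v : (s v)^*%C = s v.
  rewrite /s (rmorphXn (conjc : {rmorphism CC -> CC})); congr (_ ^+ _).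
  by apply/eqP; rewrite eq_complex /= opprK oppr0 !eqxx.
have := chi_eq hs heq.
rewrite chi_gone chi_gsum big_map big1_seq; first by move/eqP; rewrite oner_eq0.
move=> [[x [[[[v w] a] b] flag]] y] /andP [_ /ht] /= hl.
rewrite !chi_gmul.
suff -> : chi s (ideal_gen v w a b flag) = 0 by rewrite mulr0 mul0r.
have H0 : chi s (gmul (proj 2 v a) (proj 2 w b)) = 0.
  rewrite chi_gmul !chi_proj.
  move: hl; case/orP => [/andP [/eqP <- ab] | /andP [evw]].
    case: (eqVneq a (f v)) => [av|]; last by rewrite mul0r.
    by rewrite -av eq_sym (negbTE ab) mulr0.
  rewrite /Kedge negbK => /eqP <-.
  case: (eqVneq a (f v)) => [av|]; last by rewrite mul0r.
  have := hf v w evw; rewrite /Kedge -av => /negbTE ->.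
  by rewrite mulr0.
rewrite /ideal_gen; case: flag => //.
rewrite (chi_gadj hs hc).
have -> : chi s (gmul (proj 2 v a) (proj 2 w b)) = 0 := H0.
by apply/eqP; rewrite eq_complex /= oppr0 !eqxx.
Qed.
Section Walk.
Variables (V : finType) (e : rel V) (r : V).

Definition Q (a : V) : word V := reduce 2 [:: (r, 1%N); (a, 1%N)].

Definition Xe (a : V) (sg : CC) : galg V := [:: (sg, [:: (r, 1%N); (a, 1%N)])].

Definition witT := (galg V * (V * V * 'I_2 * 'I_2 * bool) * galg V)%type.

Fixpoint W (a : V) (sg : CC) (p : seq V) : seq witT :=
  match p with
  | [::] => [::]
  | b :: p' => (Xe a sg, (a, b, ord0, ord0, false), gone V)
            :: (Xe a sg, (a, b, ord_max, ord_max, false), gone V) :: W b (- sg) p'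
  end.

Definition Fterm (s : witT) : galg V :=
  gmul (gmul s.1.1 (@ideal_gen V 2 s.1.2.1.1.1.1 s.1.2.1.1.1.2 s.1.2.1.1.2 s.1.2.1.2 s.1.2.2)) s.2.

Lemma coefE (x : galg V) g : coef 2 x g = \sum_(t <- x) (reduce 2 t.2 == g)%:R * t.1.
Proof. by rewrite /coef big_mkcond; apply: eq_bigr => t _; rewrite mulr_natl mulrb. Qed.

Lemma R00 a b : reduce 2 [:: (r, 1%N); (a, 1%N); (a, 0%N); (b, 0%N)] = Q a.
Proof. by []. Qed.

Lemma R11 a b : reduce 2 [:: (r, 1%N); (a, 1%N); (a, 1%N); (b, 1%N)] = Q b.
Proof. rewrite /Q /reduce /=. case: (eqVneq r a) => [->|ra] /=; rewrite /push /= ?eqxx //.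
by rewrite (negbTE ra) /= eqxx.
Qed.

Lemma step a b sg g :
  coef 2 (Fterm (Xe a sg, (a, b, ord0, ord0, false), gone V)) g +
  coef 2 (Fterm (Xe a sg, (a, b, ord_max, ord_max, false), gone V)) g
  = sg / 2 * ((Q a == g)%:R + (Q b == g)%:R).
Proof.
rewrite !coefE /Fterm /= !big_cons big_nil /= R00 R11 omega2.
rewrite ?(mul0n, mul1n, muln0, muln1, expr0, expr1, invr1, invrN1).
set x1 := ((Q a == g)%:R : CC).
set x2 := ((Q b == g)%:R : CC).
set x3 := ((reduce 2 _ == g)%:R : CC).
set x4 := ((reduce 2 _ == g)%:R : CC).
have h2 : (2 : CC) != 0 by rewrite pnatr_eq0.
by field.
Qed.

Lemma coef_cat (x y : galg V) g : coef 2 (x ++ y) g = coef 2 x g + coef 2 y g.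
Proof. by rewrite /coef big_cat. Qed.

Lemma coef_gsum_cat (l1 l2 : seq (galg V)) g :
  coef 2 (gsum (l1 ++ l2)) g = coef 2 (gsum l1) g + coef 2 (gsum l2) g.
Proof. by rewrite /gsum flatten_cat coef_cat. Qed.

Lemma gsum_cons (x : galg V) l : gsum (x :: l) = x ++ gsum l.
Proof. by []. Qed.

Lemma coefW a sg p g : coef 2 (gsum (map Fterm (W a sg p))) g =
  sg / 2 * (Q a == g)%:R - sg * (-1) ^+ (size p) / 2 * (Q (last a p) == g)%:R.
Proof.
elim: p a sg => [|b p IH] a sg.
  by rewrite /= /coef big_nil expr0 mulr1 subrr.
have -> : gsum (map Fterm (W a sg (b :: p))) =
   Fterm (Xe a sg, (a, b, ord0, ord0, false), gone V) ++
   (Fterm (Xe a sg, (a, b, ord_max, ord_max, false), gone V) ++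
    gsum (map Fterm (W b (- sg) p))) by [].
rewrite (coef_cat (Fterm _)) (coef_cat (Fterm _)) addrA step IH exprS.
set x1 := ((Q a == g)%:R : CC).
set x2 := ((Q b == g)%:R : CC).
set x3 := ((Q (last b p) == g)%:R : CC).
set X := ((-1) ^+ size p : CC).
have h2 : (2 : CC) != 0 by rewrite pnatr_eq0.
by field.
Qed.

Lemma W_lambda a sg p : path e a p -> forall s, s \in W a sg p ->
  lambda0 e (@Kedge 2) s.1.2.1.1.1.1 s.1.2.1.1.1.2 s.1.2.1.1.2 s.1.2.1.2.
Proof.
elim: p a sg => [|b p IH] a sg //=.
case/andP => eab pp s; rewrite !inE => /or3P [/eqP->|/eqP->|]; last exact: IH.
  by rewrite /lambda0 /= eab /Kedge ?eqxx ?andbF ?orbT.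
by rewrite /lambda0 /= eab /Kedge ?eqxx ?andbF ?orbT.
Qed.

End Walk.

Lemma odd_ideal (V : finType) (e : rel V) r x y px py :
  path e r px -> last r px = x -> path e r py -> last r py = y -> e x y ->
  odd (size px) = odd (size py) -> in_ideal e 2 (gone V).
Proof.
move=> hpx lx hpy ly exy hodd.
exists (W r r 1 (rcons px y) ++ W r r 1 py); split.
  move=> s; rewrite mem_cat => /orP [] hs.
    apply: (W_lambda _ hs); by rewrite rcons_path hpx lx exy.
  exact: (W_lambda hpy hs).
move=> g.
rewrite map_cat coef_gsum_cat !coefW size_rcons last_rcons ly exprS.
rewrite -(signr_odd _ (size px)) hodd signr_odd.
have QR : Q r r = [::] by rewrite /Q /reduce /= /push /= eqxx.
rewrite QR coefE big_seq1 /=.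
have -> : reduce 2 [::] = [::] :> word V by [].
set x0 := (([::] : word V) == g)%:R : CC.
set xy := ((Q r y == g)%:R : CC).
set X := ((-1) ^+ size py : CC).
have h2 : (2 : CC) != 0 by rewrite pnatr_eq0.
by field.
Qed.

Lemma noncol_ideal (V : finType) (e : rel V) (r : V) :
  connected_graph e -> ~ colorable e 2 -> in_ideal e 2 (gone V).
Proof.
move=> hc hnc.
have ex x : exists p, path e r p && (last r p == x).
  by case/connectP: (hc r x) => p pp lp; exists p; rewrite pp lp eqxx.
pose px x := xchoose (ex x).
have pxP x : path e r (px x) && (last r (px x) == x) := xchooseP (ex x).
pose f x : 'I_2 := if odd (size (px x)) then ord_max else ord0.
case: (boolP [forall x, forall y, e x y ==> (f x != f y)]) => [/forallP H|].
  case: hnc; exists f => x y exy.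
  by have /forallP /(_ y) /implyP /(_ exy) := H x.
rewrite negb_forall => /existsP [x]; rewrite negb_forall => /existsP [y].
rewrite negb_imply negbK => /andP [exy fxy].
case/andP: (pxP x) => hx /eqP lx; case/andP: (pxP y) => hy /eqP ly.
apply: (odd_ideal hx lx hy ly exy).
move: fxy; rewrite /f.
by case: (odd (size (px x))); case: (odd (size (px y))).
Qed.

Theorem mainTheorem16 (V : finType) (e : rel V) :
  simple_graph e -> connected_graph e -> (1 < #|V|)%N ->
  (is_chi_alg e 2 <-> is_chromatic_number e 2).
Proof.
move=> [irr sym] hc hV.
have [v [w evw]] : exists v w, e v w.
  case/card_gt1P: hV => x [y [_ _ xy]].
  case/connectP: (hc x y) => [[|b p]] /=.
    by move=> _ yx; rewrite yx eqxx in xy.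
  by case/andP => exb _ _; exists x, b.
split.
- case=> _ [hA2 _]; split => //; split.
    have [//|hnc] := Classical_Prop.classic (colorable e 2).
    by exfalso; apply: hA2; exact: (noncol_ideal v hc hnc).
  move=> c'; case: c' => [|[|//]] // _ _ [f hf].
  by have := hf v w evw; rewrite /Kedge (ord1 (f v)) (ord1 (f w)) eqxx.
- case=> _ [hcol _]; split => //; split; first exact: col_nonzero.
  move=> c'; case: c' => [|[|//]] // _ _; apply.
  exact: (ideal1 evw).
Qed.
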